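(* Let $w\in\mathbb{Q}^{V_+}_{\ge0}$, $b\in\mathbb{Z}^{V_+}_{\ge0}$, $\xi\in[N]$, and let $S=\{v_1,\dots,v_\ell\}\subseteq V_+$ be nonempty with $w_{v_1}\le\dots\le w_{v_\ell}$. Let $k'\in\mathbb{Z}_{>0}$ satisfy $k_\xi(S)-k'\le b(S)$, and let $j\in[\ell]$ be the smallest index with $k_\xi(S)-k'\le\sum_{i\in[j]}b_{v_i}$. Set $\bar\alpha_S=\mathbb{I}(k_\xi(S)>k')\,w_{v_j}$ and $\bar\beta_v=\mathbb{I}(v\in\{v_1,\dots,v_{j-1}\})(w_v-w_{v_j})$ for all $v\in V_+$. Then $(\bar\alpha_S,\bar\beta)$ is an optimal solution of the dual linear program $$\max\Big\{\alpha_S(k_\xi(S)-k')+\sum_{v\in V_+}\beta_vb_v:\ \alpha_S+\beta_v\le w_v\ (v\in S),\ \beta_v\le w_v\ (v\in V_+\setminus S),\ \alpha_S\ge0,\ \beta\le0\Big\}$$ of $\mathcal{L}^*_\xi(S,k')=\min\{\sum_{v\in V_+}w_vy_v:\ y(S)\ge k_\xi(S)-k',\ y_v\le b_v\ \forall v\in V_+,\ y\ge0\}$, and $\bar\alpha_S\le\mathcal{L}^*_\xi(S,k')$.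
   Context: $V_+$ is a finite set of customers; $C>0$ is the capacity; $d^\xi\in\mathbb{Q}^{V_+}_{\ge0}$ is the demand vector of scenario $\xi$; $f(S)=\sum_{i\in S}f(i)$; $k_\xi(S)=\lceil d^\xi(S)/C\rceil$; $[j]=\{1,\dots,j\}$ (empty if $j\le 0$); $\mathbb{I}$ is the indicator function. *)

(* Defs.v *)
From mathcomp Require Import all_boot all_order all_algebra.
Set Implicit Arguments. Unset Strict Implicit. Unset Printing Implicit Defensive.
Import Order.TTheory GRing.Theory Num.Theory.
Local Open Scope ring_scope.

Definition kxi (V : finType) (C : rat) (dxi : V -> rat) (S : {set V}) : int :=
  Num.ceil ((\sum_(i in S) dxi i) / C).

Definition primal_feasible (V : finType) (b : V -> nat) (S : {set V}) (rhs : int)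
  (y : V -> rat) : Prop :=
  [/\ rhs%:~R <= \sum_(v in S) y v,
      forall v, y v <= (b v)%:R
    & forall v, 0 <= y v].

Definition primal_obj (V : finType) (w y : V -> rat) : rat := \sum_v w v * y v.

Definition dual_feasible (V : finType) (w : V -> rat) (S : {set V})
  (alpha : rat) (beta : V -> rat) : Prop :=
  [/\ forall v, v \in S -> alpha + beta v <= w v,
      forall v, v \notin S -> beta v <= w v,
      0 <= alpha
    & forall v, beta v <= 0].

Definition dual_obj (V : finType) (b : V -> nat) (rhs : int)
  (alpha : rat) (beta : V -> rat) : rat :=
  alpha * rhs%:~R + \sum_v beta v * (b v)%:R.

(* Main.v *)
Require Import Defs.
From mathcomp Require Import all_boot all_order all_algebra.
From mathcomp Require Import ring lra zify.
Import Order.TTheory GRing.Theory Num.Theory.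
Local Open Scope ring_scope.

Lemma castS (I:finType) (P : pred I) (F : I -> nat) :
  ((\sum_(i | P i) (F i)%:R : int)%:~R : rat) = \sum_(i | P i) (F i)%:R.
Proof. rewrite rmorph_sum; apply: eq_bigr => i _; by rewrite rmorph_nat. Qed.

Lemma splitj (R : zmodType) l (j : 'I_l) (F : 'I_l -> R) :
  \sum_(i < l | (i <= j)%N) F i = F j + \sum_(i < l | (i < j)%N) F i.
Proof.
rewrite (bigD1 j) //=; congr (_ + _); apply: eq_bigl => i.
by rewrite ltn_neqAle -val_eqE /= andbC.
Qed.

Lemma weak (V:finType) (w:V->rat) b S (rhs:int) alpha beta y :
 dual_feasible w S alpha beta -> primal_feasible b S rhs y ->
 dual_obj b rhs alpha beta <= primal_obj w y.
Proof.
case=> h1 h2 h3 h4 [p1 p2 p3]; rewrite /dual_obj /primal_obj.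
apply: (@le_trans _ _ (alpha * \sum_(x in S) y x + \sum_x beta x * y x)).
  apply: lerD; first by apply: ler_wpM2l.
  by apply: ler_sum => x _; apply: ler_wnM2l.
rewrite mulr_sumr [\sum_x beta x * y x](bigID (mem S)) /= addrA -big_split /=.
rewrite [X in _ <= X](bigID (mem S)) /=.
apply: lerD; apply: ler_sum => x hx.
  by rewrite -mulrDl; apply: ler_wpM2r => //; exact: h1.
by apply: ler_wpM2r => //; exact: h2.
Qed.

Arguments weak {V w b S rhs alpha beta y}.

Theorem lemma6 (V : finType) (C : rat) (N : nat) (d : 'I_N -> V -> rat)
  (w : V -> rat) (b : V -> nat) (xi : 'I_N)
  (S : {set V}) (l : nat) (v : 'I_l -> V) (k' : int) (j : 'I_l) :
  0 < C ->
  (forall n x, 0 <= d n x) ->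
  (forall x, 0 <= w x) ->
  S != set0 ->
  injective v ->
  S = [set v i | i : 'I_l] ->
  (forall i i' : 'I_l, (i <= i')%N -> w (v i) <= w (v i')) ->
  0 < k' ->
  kxi C (d xi) S - k' <= (\sum_(x in S) (b x)%:R : int) ->
  kxi C (d xi) S - k' <= (\sum_(i < l | (i <= j)%N) (b (v i))%:R : int) ->
  (forall j0 : 'I_l, (j0 < j)%N ->
     ~ (kxi C (d xi) S - k' <= (\sum_(i < l | (i <= j0)%N) (b (v i))%:R : int))) ->
  let rhs := kxi C (d xi) S - k' in
  let alpha_bar : rat := if k' < kxi C (d xi) S then w (v j) else 0 in
  let beta_bar : V -> rat := fun x =>
    if x \in [set v i | i : 'I_l & (i < j)%N] then w x - w (v j) else 0 in
  [/\ dual_feasible w S alpha_bar beta_bar,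
      (forall alpha beta, dual_feasible w S alpha beta ->
         dual_obj b rhs alpha beta <= dual_obj b rhs alpha_bar beta_bar)
    & (forall y, primal_feasible b S rhs y -> alpha_bar <= primal_obj w y)].
Proof.
move=> C0 d0 w0 Sn0 vinj HS wmono k0 HbS Hj Hmin rhs ab bb.
move: Hj Hmin; rewrite -/rhs => Hj Hmin.
have memI : forall x, reflect (exists2 i : 'I_l, (i < j)%N & x = v i)
    (x \in [set v i | i : 'I_l & (i < j)%N]).
  move=> x; apply: (iffP imsetP) => -[i hi ->]; exists i => //; move: hi; by rewrite inE.
have subS : forall i, v i \in S by move=> i; rewrite HS; apply: imset_f.
have vinjA : forall (A : {pred 'I_l}), {in A &, injective v}.
  by move=> A x y _ _ /vinj.
have [hlt|hge] := ltP k' (kxi C (d xi) S); last first.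
  have j0 : (j : nat) = 0%N.
    apply/eqP; rewrite -leqn0 leqNgt; apply/negP => hj.
    apply: (Hmin (Ordinal (leq_ltn_trans (leq0n j) (ltn_ord j))) hj).
    apply: (@le_trans _ _ 0); first by rewrite /rhs subr_le0.
    by apply: sumr_ge0 => i _; apply: ler0n.
  have bb0 : forall x, bb x = 0.
    move=> x; rewrite /bb; case: memI => // -[i]; by rewrite j0.
  have abE : ab = 0 by rewrite /ab ltNge hge.
  have feas : dual_feasible w S ab bb.
    by split => [x _|x _||x]; rewrite ?abE ?bb0 ?add0r ?w0.
  split => //.
    move=> al be [f1 f2 f3 f4]; rewrite /dual_obj abE mul0r add0r.
    have -> : \sum_x bb x * (b x)%:R = 0 by apply: big1 => x _; rewrite bb0 mul0r.
    apply: (@le_trans _ _ (al * rhs%:~R)).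
      rewrite gerDl; apply: sumr_le0 => x _; apply: mulr_le0_ge0; [exact: f4 | exact: ler0n].
    apply: mulr_ge0_le0 => //; rewrite lerz0 /rhs subr_le0; exact: hge.
  move=> y [_ _ p3]; rewrite abE /primal_obj; apply: sumr_ge0 => x _.
  exact: mulr_ge0.
set a := w (v j).
have abE : ab = a by rewrite /ab hlt.
set Bl := (\sum_(i < l | (i < j)%N) (b (v i))%:R : int).
have hBl : Bl < rhs.
  case: (ltnP 0 j) => hj.
    have jl : (j.-1 < l)%N by apply: leq_ltn_trans (leq_pred j) (ltn_ord j).
    have := Hmin (Ordinal jl); rewrite /= prednK // => /(_ (leqnn _)).
    have -> : (\sum_(i < l | (i <= j.-1)%N) (b (v i))%:R : int) = Bl.
      by apply: eq_bigl => i; rewrite -ltnS prednK.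
    by move/negP; rewrite -ltNge.
  rewrite /Bl big_pred0; last by move=> i; rewrite ltnNge (leq_trans hj).
  by rewrite /rhs subr_gt0.
set sr : rat := rhs%:~R.
set Blr : rat := \sum_(i < l | (i < j)%N) (b (v i))%:R.
set bj : rat := (b (v j))%:R.
have cBl : (Bl%:~R : rat) = Blr.
  by rewrite /Bl /Blr rmorph_sum; apply: eq_bigr => i _; rewrite rmorph_nat.
have h1 : Blr + 1 <= sr.
  have : ((Bl + 1)%:~R : rat) <= rhs%:~R by rewrite ler_int; lia.
  by rewrite intrD -cBl; apply.
have h2 : sr <= Blr + bj.
  have : (rhs%:~R : rat) <= (Bl + (b (v j))%:R)%:~R by rewrite ler_int addrC -splitj.
  have cbj : bj = ((b (v j))%:R : int)%:~R by rewrite /bj rmorph_nat.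
  by rewrite -cBl cbj -intrD; apply.
set Wl := \sum_(i < l | (i < j)%N) w (v i) * (b (v i))%:R.
have Wl0 : 0 <= Wl by apply: sumr_ge0 => i _; apply: mulr_ge0 => //; exact: ler0n.
have feas : dual_feasible w S ab bb.
  rewrite abE /bb; split.
  - move=> x; rewrite HS => /imsetP [i _ ->].
    case: memI => [_|hn]; first by rewrite addrC subrK.
    rewrite addr0; apply: wmono; rewrite leqNgt; apply/negP => hi.
    by apply: hn; exists i.
  - move=> x hx; case: memI => [[i _ hxi]|_]; last exact: w0.
    by move: hx; rewrite hxi subS.
  - exact: w0.
  - move=> x; case: memI => [[i hi ->]|_] //.
    by rewrite subr_le0; apply: wmono; apply: ltnW.
have objbar : dual_obj b rhs ab bb = a * sr + (Wl - a * Blr).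
  rewrite /dual_obj abE; congr (_ + _).
  rewrite (eq_bigr (fun x => if x \in [set v i | i : 'I_l & (i < j)%N]
                              then (w x - a) * (b x)%:R else 0)); last first.
    by move=> x _; rewrite /bb; case: ifP => _ //; rewrite mul0r.
  rewrite -big_mkcond /= big_imset //=.
  rewrite (eq_bigl (fun i : 'I_l => (i < j)%N)); last by move=> i; rewrite inE.
  rewrite /Wl /Blr mulr_sumr -sumrB; apply: eq_bigr => i _; ring.
split => //.
  move=> al be [f1 f2 f3 f4]; rewrite objbar /dual_obj -/sr.
  set Sb := \sum_x be x * (b x)%:R.
  set I' := [set v i | i : 'I_l & (i <= j)%N].
  have E1 : Sb <= \sum_(i < l | (i < j)%N) be (v i) * (b (v i))%:R + be (v j) * bj.
    rewrite /Sb (bigID (mem I')) /=.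
    have -> : \sum_(x | x \in I') be x * (b x)%:R = 
              be (v j) * bj + \sum_(i < l | (i < j)%N) be (v i) * (b (v i))%:R.
      rewrite big_imset //= -splitj; apply: eq_bigl => i; by rewrite inE.
    rewrite [X in _ <= X]addrC gerDl; apply: sumr_le0 => x _; apply: mulr_le0_ge0; [exact: f4 | exact: ler0n].
  have E2 : \sum_(i < l | (i < j)%N) be (v i) * (b (v i))%:R <= Wl - al * Blr.
    rewrite /Wl /Blr mulr_sumr -sumrB; apply: ler_sum => i _.
    rewrite -mulrBl; apply: ler_wpM2r; first exact: ler0n.
    by rewrite lerBrDl; apply: f1.
  have E3 : be (v j) * bj <= be (v j) * (sr - Blr).
    by apply: ler_wnM2l => //; lra.
  have E4 : be (v j) * (sr - Blr) <= (a - al) * (sr - Blr).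
    apply: ler_wpM2r; first lra.
    by rewrite lerBrDl; apply: f1.
  have -> : a * sr + (Wl - a * Blr) = al * sr + (Wl - al * Blr) + (a - al) * (sr - Blr)
    by ring.
  lra.
move=> y hy; apply: (le_trans _ (weak feas hy)); rewrite objbar abE.
have : a * 1 <= a * (sr - Blr) by apply: ler_wpM2l; [exact: w0 | lra].
lra.
Qed.
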